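(* Let $S'\in\mathcal{L_D}$. A join-semilattice $S$ is equimorphic to $S'$ (as join-semilattices) if and only if there exist two chains $C_1=(X_1,\leq_1)$, $C_2=(X_2,\leq_2)$ and a one-to-one join-preserving map of $S$ into $C_1\times C_2$ whose image $T$ satisfies: (1) the first projection $A_1$ of $T$ has order type $\omega$; (2) the second projection $A_2$ of $T$ is not order-scattered; (3) the set $(\{x\}\times A_2)\cap T$ is finite for every $x\in A_1$.
   Context: A bichain is $B=(X,\leq_1,\leq_2)$ with $\leq_1,\leq_2$ linear orders on $X$; $C(B)$ is the closure system on $X$ whose closed sets are the sets $I_1\cap I_2$ with $I_k$ an initial segment of $(X,\leq_k)$, and $K(C(B))$ is the join-semilattice of its compact elements (closures of finite sets). $\mathcal{L_D}$ is the class of join-semilattices isomorphic to $K(C(B))$ for a bichain $B$ with $(X,\leq_1)$ of order type $\omega$ and $(X,\leq_2)$ not order-scattered. A poset is order-scattered if it contains no copy of $\mathbb{Q}$. Products of chains carry the componentwise order. Two join-semilattices are equimorphic if each embeds into the other by a one-to-one join-preserving map. *)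

(* Defs.v *)
From mathcomp Require Import all_boot all_order all_algebra.
From Stdlib Require List.
Set Implicit Arguments. Unset Strict Implicit. Unset Printing Implicit Defensive.

Record JSL := {
  jcar :> Type;
  jle : jcar -> jcar -> Prop;
  jjoin : jcar -> jcar -> jcar;
  jle_refl : forall a, jle a a;
  jle_trans : forall a b c, jle a b -> jle b c -> jle a c;
  jle_antisym : forall a b, jle a b -> jle b a -> a = b;
  jjoin_ubl : forall a b, jle a (jjoin a b);
  jjoin_ubr : forall a b, jle b (jjoin a b);
  jjoin_least : forall a b c, jle a c -> jle b c -> jle (jjoin a b) c
}.

Definition linear_order (X : Type) (le : X -> X -> Prop) : Prop :=
  (forall x, le x x) /\
  (forall x y z, le x y -> le y z -> le x z) /\
  (forall x y, le x y -> le y x -> x = y) /\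
  (forall x y, le x y \/ le y x).

Record Chain := {
  ccar :> Type;
  cle : ccar -> ccar -> Prop;
  cle_linear : linear_order cle
}.

Definition prod_le (C1 C2 : Chain) (p q : (C1 * C2)%type) : Prop :=
  cle p.1 q.1 /\ cle p.2 q.2.

Definition is_lub (T : Type) (le : T -> T -> Prop) (a b c : T) : Prop :=
  le a c /\ le b c /\ (forall d, le a d -> le b d -> le c d).

Definition join_preserving (S : JSL) (T : Type) (le : T -> T -> Prop) (f : S -> T) : Prop :=
  forall a b : S, is_lub le (f a) (f b) (f (jjoin a b)).

Definition jsl_embeds (S S' : JSL) : Prop :=
  exists f : S -> S', (forall a b, f a = f b -> a = b) /\ join_preserving (@jle S') f.

Definition equimorphic (S S' : JSL) : Prop := jsl_embeds S S' /\ jsl_embeds S' S.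

Definition has_order_type_omega (X : Type) (le : X -> X -> Prop) (A : X -> Prop) : Prop :=
  exists g : nat -> X,
    (forall n m : nat, (n <= m)%N <-> le (g n) (g m)) /\
    (forall x, A x <-> exists n, g n = x).

Definition order_scattered (X : Type) (le : X -> X -> Prop) (A : X -> Prop) : Prop :=
  ~ exists h : rat -> X,
      (forall q, A (h q)) /\ (forall q r : rat, (q <= r)%R <-> le (h q) (h r)).

Definition set_eq (X : Type) (A B : X -> Prop) : Prop := forall x, A x <-> B x.

Definition initial_segment (X : Type) (le : X -> X -> Prop) (I : X -> Prop) : Prop :=
  forall x y, I y -> le x y -> I x.

Definition bc_closed (X : Type) (le1 le2 : X -> X -> Prop) (Z : X -> Prop) : Prop :=
  exists I1 I2 : X -> Prop,
    initial_segment le1 I1 /\ initial_segment le2 I2 /\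
    set_eq Z (fun x => I1 x /\ I2 x).

Definition bc_closure (X : Type) (le1 le2 : X -> X -> Prop) (Y : X -> Prop) : X -> Prop :=
  fun x => forall Z, bc_closed le1 le2 Z -> (forall y, Y y -> Z y) -> Z x.

Definition bc_compact (X : Type) (le1 le2 : X -> X -> Prop) (Z : X -> Prop) : Prop :=
  exists F : list X, set_eq Z (bc_closure le1 le2 (fun y => Stdlib.Lists.List.In y F)).

Definition jsl_iso_KCB (S : JSL) (X : Type) (le1 le2 : X -> X -> Prop) : Prop :=
  exists phi : S -> (X -> Prop),
    (forall a, bc_compact le1 le2 (phi a)) /\
    (forall Z, bc_compact le1 le2 Z -> exists a, set_eq (phi a) Z) /\
    (forall a b, set_eq (phi a) (phi b) -> a = b) /\
    (forall a b, set_eq (phi (jjoin a b))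
                        (bc_closure le1 le2 (fun x => phi a x \/ phi b x))).

Definition in_LD (S : JSL) : Prop :=
  exists (X : Type) (le1 le2 : X -> X -> Prop),
    linear_order le1 /\ linear_order le2 /\
    has_order_type_omega le1 (fun _ => True) /\
    ~ order_scattered le2 (fun _ => True) /\
    jsl_iso_KCB S le1 le2.

(* Main.v *)
Require Import Defs.
From mathcomp Require Import all_boot all_order all_algebra.
From mathcomp Require Import lra.
From Stdlib Require Import Classical ClassicalEpsilon.
From Stdlib Require List FinFun.
From Stdlib Require Import Lia.

Module Part1.
Set Implicit Arguments. Unset Strict Implicit. Unset Printing Implicit Defensive.
Import Order.TTheory GRing.Theory Num.Theory.

Definition maxo {T : Type} (le : T -> T -> Prop) (x y : T) : T :=
  if excluded_middle_informative (le x y) then y else x.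

Section Maxo.
Variables (T : Type) (le : T -> T -> Prop).
Hypothesis Hl : linear_order le.

Lemma lo_refl x : le x x. Proof. by case: Hl. Qed.
Lemma lo_trans x y z : le x y -> le y z -> le x z.
Proof. case: Hl => _ [H _]; exact: H. Qed.
Lemma lo_anti x y : le x y -> le y x -> x = y.
Proof. case: Hl => _ [_ [H _]]; exact: H. Qed.
Lemma lo_tot x y : le x y \/ le y x.
Proof. case: Hl => _ [_ [_ H]]; exact: H. Qed.
Lemma lo_not x y : ~ le x y -> le y x.
Proof. by move=> H; case: (lo_tot x y). Qed.

Lemma maxo_r x y : le x y -> maxo le x y = y.
Proof. by rewrite /maxo => H; destruct excluded_middle_informative. Qed.
Lemma maxo_l x y : le y x -> maxo le x y = x.
Proof. rewrite /maxo => H2; destruct excluded_middle_informative as [H1|H1] => //; exact: lo_anti. Qed.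
Lemma maxo_ubl x y : le x (maxo le x y).
Proof. rewrite /maxo; destruct excluded_middle_informative => //; exact: lo_refl. Qed.
Lemma maxo_ubr x y : le y (maxo le x y).
Proof. rewrite /maxo; destruct excluded_middle_informative as [H|H]; [exact: lo_refl|exact: lo_not]. Qed.
Lemma maxo_eq_r x y : maxo le x y = y -> le x y.
Proof. move=> <-; exact: maxo_ubl. Qed.
Lemma maxo_eq_l x y : maxo le x y = x -> le y x.
Proof. move=> H; have := maxo_ubr x y; by rewrite H. Qed.
End Maxo.

Lemma maxo_id T (le : T -> T -> Prop) x : maxo le x x = x.
Proof. by rewrite /maxo; destruct excluded_middle_informative. Qed.

Lemma maxo_map T T' (le : T -> T -> Prop) (le' : T' -> T' -> Prop) (m : T -> T') x y :
  (le x y <-> le' (m x) (m y)) -> m (maxo le x y) = maxo le' (m x) (m y).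
Proof.
move=> H; rewrite /maxo; destruct (excluded_middle_informative (le x y)) as [A|A]; destruct (excluded_middle_informative (le' (m x) (m y))) as [B|B] => //; exfalso; tauto.
Qed.

Lemma lub_unique T (le : T -> T -> Prop) x y z z' :
  (forall a b, le a b -> le b a -> a = b) ->
  is_lub le x y z -> is_lub le x y z' -> z = z'.
Proof. move=> A [H1 [H2 H3]] [H1' [H2' H3']]; apply: A; auto. Qed.

Lemma jjoin_lub (S : JSL) (x y : S) : is_lub (@jle S) x y (jjoin x y).
Proof. split; [exact: jjoin_ubl|split; [exact: jjoin_ubr|exact: jjoin_least]]. Qed.

Lemma lub_jjoin (S : JSL) (x y z : S) : is_lub (@jle S) x y z -> z = jjoin x y.
Proof. move=> H; apply: (lub_unique (@jle_antisym S) H); exact: jjoin_lub. Qed.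

Lemma prod_lub (C1 C2 : Chain) (p q : (C1 * C2)%type) :
  is_lub (@prod_le C1 C2) p q (maxo (@cle C1) p.1 q.1, maxo (@cle C2) p.2 q.2).
Proof.
have L1 := cle_linear C1; have L2 := cle_linear C2.
split; [|split].
- split; [exact: maxo_ubl|exact: maxo_ubl].
- split; [exact: maxo_ubr|exact: maxo_ubr].
- move=> d [H1 H2] [H3 H4]; split => /=;
  rewrite /maxo; destruct excluded_middle_informative => //.
Qed.

Lemma prod_lub_eq (C1 C2 : Chain) (p q z : (C1 * C2)%type) :
  is_lub (@prod_le C1 C2) p q z -> z = (maxo (@cle C1) p.1 q.1, maxo (@cle C2) p.2 q.2).
Proof.
move=> H; apply: (lub_unique _ H (prod_lub p q)).
move=> [a1 a2] [b1 b2] [/= H1 H2] [/= H3 H4].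
by rewrite (lo_anti (cle_linear C1) H1 H3) (lo_anti (cle_linear C2) H2 H4).
Qed.

Lemma escape (Y Z : Type) (G : nat -> Y) (Phi : Y -> Z) (P : Y -> Prop) (L : list Z) :
  (forall k k', Phi (G k) = Phi (G k') -> k = k') ->
  (forall y, P y -> List.In (Phi y) L) -> exists k, ~ P (G k).
Proof.
move=> Hinj HL; apply: NNPP => Hn.
have HP : forall k, P (G k) by move=> k; apply: NNPP => Hk; apply: Hn; exists k.
have ND : List.NoDup (List.map (fun k => Phi (G k)) (List.seq 0 (length L).+1)).
  apply: FinFun.Injective_map_NoDup; [move=> a b; exact: Hinj|exact: List.seq_NoDup].
have := List.NoDup_incl_length ND (l' := L).
rewrite List.length_map List.length_seq => H.
have : ((length L).+1 <= length L)%coq_nat.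
  apply: H => z /List.in_map_iff [k [<- _]]; exact: HL.
lia.
Qed.

Lemma maxo_case T (le : T -> T -> Prop) x y : maxo le x y = x \/ maxo le x y = y.
Proof. rewrite /maxo; destruct excluded_middle_informative; tauto. Qed.
Arguments lo_trans {T le} Hl {x y z}.
Arguments lo_anti {T le} Hl {x y}.
Arguments lo_not {T le} Hl {x y}.

End Part1.
Import Part1.

Module Part2.
Set Implicit Arguments. Unset Strict Implicit. Unset Printing Implicit Defensive.
Import Order.TTheory GRing.Theory Num.Theory.
Local Open Scope ring_scope.

Lemma rat_mid (m : rat) (U : list rat) : (forall u, List.In u U -> m < u) ->
  exists v, m < v /\ forall u, List.In u U -> v < u.
Proof.
elim: U => [|u U IH] H.
  exists (m + 1); split => //; lra.
have [v [Hv1 Hv2]] : exists v, m < v /\ forall u, List.In u U -> v < u.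
  apply: IH => x Hx; apply: H; by right.
have Hu : m < u by apply: H; left.
case: (leP v u) => Hvu.
- exists ((m + v)/2); split; first lra.
  move=> x [<-|Hx]; first lra.
  have := Hv2 _ Hx; lra.
- exists ((m + u)/2); split; first lra.
  move=> x [<-|Hx]; first lra.
  have := Hv2 _ Hx; lra.
Qed.

Lemma rat_below (U : list rat) : exists v, forall u, List.In u U -> v < u.
Proof.
elim: U => [|u U [v Hv]]; first by exists 0.
case: (leP v u) => Hvu.
- exists (v - 1) => x [<-|Hx]; first lra. have := Hv _ Hx; lra.
- exists (u - 1) => x [<-|Hx]; first lra. have := Hv _ Hx; lra.
Qed.

Lemma rat_between (L U : list rat) :
  (forall l u, List.In l L -> List.In u U -> l < u) ->
  exists v, (forall l, List.In l L -> l < v) /\ (forall u, List.In u U -> v < u).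
Proof.
elim: L => [|l L IH] H.
  have [v Hv] := rat_below U; by exists v.
have [v [Hv1 Hv2]] : exists v, (forall l, List.In l L -> l < v) /\ (forall u, List.In u U -> v < u).
  apply: IH => a b Ha Hb; apply: H => //; by right.
have Hm : forall u, List.In u U -> Num.max v l < u.
  move=> u Hu; rewrite gt_max; apply/andP; split; [exact: Hv2|apply: H => //; by left].
have [w [Hw1 Hw2]] := rat_mid Hm.
exists w; split => // x [<-|Hx].
- apply: le_lt_trans Hw1; by rewrite le_max lexx orbT.
- apply: lt_trans (Hv1 _ Hx) _; apply: le_lt_trans Hw1; by rewrite le_max lexx.
Qed.

Lemma pickle_rat_inj : injective (pickle : rat -> nat).
Proof. exact: pcan_inj pickleK. Qed.

Definition bP (P : Prop) : bool := if excluded_middle_informative P then true else false.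
Lemma bPP (P : Prop) : bP P = true <-> P.
Proof. by rewrite /bP; destruct excluded_middle_informative. Qed.

Lemma iff_helper (P Q : Prop) (a b : rat) : P -> ~ Q -> a < b ->
  (P <-> a <= b) /\ (Q <-> b <= a).
Proof.
move=> HP HQ Hab; split; split.
- move=> _; exact: ltW.
- by move=> _.
- move=> H; exfalso; exact: HQ H.
- by rewrite leNgt Hab.
Qed.

Section GE.
Variables (T : Type) (le : T -> T -> Prop).
Hypothesis Hl : linear_order le.
Variable y : nat -> T.

Definition ltT a b := le a b /\ ~ le b a.

Definition selv (s : seq rat) (n : nat) (P : nat -> Prop) : list rat :=
  List.map (fun i => nth 0 s i) (List.filter (fun i => bP (P i)) (List.seq 0 n)).

Lemma selv_In s n P v : List.In v (selv s n P) <-> exists i, (i < n)%N /\ P i /\ v = nth 0 s i.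
Proof.
rewrite /selv List.in_map_iff; split.
- move=> [i [<- /List.filter_In [/List.in_seq Hi /bPP HP]]]; exists i; split => //.
  apply/ssrnat.ltP; lia.
- move=> [i [/ssrnat.ltP Hi [HP ->]]]; exists i; split => //.
  apply/List.filter_In; split; [apply/List.in_seq; lia|exact/bPP].
Qed.

Lemma ex_val s n : exists v : rat,
  (forall l u, List.In l (selv s n (fun i => ltT (y i) (y n))) ->
               List.In u (selv s n (fun i => ltT (y n) (y i))) -> l < u) ->
  (forall l, List.In l (selv s n (fun i => ltT (y i) (y n))) -> l < v) /\
  (forall u, List.In u (selv s n (fun i => ltT (y n) (y i))) -> v < u).
Proof.
case: (classic (forall l u, List.In l (selv s n (fun i => ltT (y i) (y n))) ->
               List.In u (selv s n (fun i => ltT (y n) (y i))) -> l < u)) => H.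
- have [v Hv] := rat_between H; by exists v.
- by exists 0.
Qed.

Definition val s n : rat :=
  match selv s n (fun i => y i = y n) with
  | x :: _ => x
  | [::] => proj1_sig (constructive_indefinite_description _ (ex_val s n))
  end.

Lemma val_cons s n x r : selv s n (fun i => y i = y n) = x :: r -> val s n = x.
Proof. by rewrite /val => ->. Qed.
Lemma val_nil s n : selv s n (fun i => y i = y n) = [::] ->
  val s n = proj1_sig (constructive_indefinite_description _ (ex_val s n)).
Proof. by rewrite /val => ->. Qed.

Fixpoint Eseq n : seq rat := match n with 0 => [::] | n'.+1 => rcons (Eseq n') (val (Eseq n') n') end.
Definition ee n := val (Eseq n) n.

Lemma size_Eseq n : size (Eseq n) = n.
Proof. by elim: n => //= n IH; rewrite size_rcons IH. Qed.

Lemma nth_Eseq n i : (i < n)%N -> nth 0 (Eseq n) i = ee i.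
Proof.
elim: n => // n IH Hi /=; rewrite nth_rcons size_Eseq.
case: (ltngtP i n) => H; first exact: IH.
- by move: Hi; rewrite ltnS leqNgt H.
- by rewrite H.
Qed.

Definition Inv n := forall i j, (i < n)%N -> (j < n)%N -> (le (y i) (y j) <-> ee i <= ee j).

Lemma Inv_step n : Inv n -> forall i, (i < n)%N ->
  (le (y i) (y n) <-> ee i <= ee n) /\ (le (y n) (y i) <-> ee n <= ee i).
Proof.
move=> HI.
have selE : forall P v, List.In v (selv (Eseq n) n P) <-> exists i, (i < n)%N /\ P i /\ v = ee i.
  move=> P v; rewrite selv_In; split => -[i [Hi [HP ->]]]; exists i; by rewrite nth_Eseq.
have ltE : forall i j, (i < n)%N -> (j < n)%N -> ltT (y i) (y j) -> ee i < ee j.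
  move=> i j Hi Hj [H1 H2]; rewrite lt_neqAle; apply/andP; split; last by apply/HI.
  apply/negP => /eqP E; apply: H2; apply/HI => //; by rewrite E.
case E: (selv (Eseq n) n (fun i => y i = y n)) => [|x r].
- have [v [Hveq [Hl1 Hl2]]] : exists v, ee n = v /\
      (forall l, List.In l (selv (Eseq n) n (fun i => ltT (y i) (y n))) -> l < v) /\
      (forall u, List.In u (selv (Eseq n) n (fun i => ltT (y n) (y i))) -> v < u).
    exists (proj1_sig (constructive_indefinite_description _ (ex_val (Eseq n) n))).
    split; first by rewrite /ee (val_nil E).
    apply: (proj2_sig (constructive_indefinite_description _ (ex_val (Eseq n) n))).
    move=> l u /selE [i [Hi [Hli ->]]] /selE [j [Hj [Hlj ->]]].
    apply: ltE => //; case: Hli => A B; case: Hlj => C D; split; first exact: (lo_trans Hl A C).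
    move=> F; apply: B; exact: (lo_trans Hl C F).
  rewrite Hveq.
  move=> i Hi.
  have Hne : y i <> y n.
    move=> Heq; have : List.In (ee i) (selv (Eseq n) n (fun i => y i = y n)) by apply/selE; exists i.
    by rewrite E.
  case: (lo_tot Hl (y i) (y n)) => H.
  + have Hlt : ltT (y i) (y n) by split => // H'; apply: Hne; exact: (lo_anti Hl H H').
    have Hin : List.In (ee i) (selv (Eseq n) n (fun j => ltT (y j) (y n))) by apply/selE; exists i.
    have Hv := Hl1 (ee i) Hin.
    case: Hlt => _ F; exact: (iff_helper H F Hv).
  + have Hlt : ltT (y n) (y i) by split => // H'; apply: Hne; exact: (lo_anti Hl H' H).
    have Hin : List.In (ee i) (selv (Eseq n) n (fun j => ltT (y n) (y j))) by apply/selE; exists i.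
    have Hv := Hl2 (ee i) Hin.
    case: Hlt => _ F; have [A B] := iff_helper H F Hv; by split.
- have : List.In x (selv (Eseq n) n (fun i => y i = y n)) by rewrite E; left.
  move=> /selE [j [Hj [Hyj Hx]]] i Hi.
  have -> : ee n = x by rewrite /ee (val_cons E).
  rewrite Hx -Hyj.
  split; [exact: (HI i j Hi Hj)|exact: (HI j i Hj Hi)].
Qed.

Lemma Inv_all n : Inv n.
Proof.
elim: n => [|n IH]; first by move=> i j.
move=> i j; rewrite !ltnS => Hi' Hj'.
have [Hi|->] : (i < n)%N \/ i = n by move: Hi'; rewrite leq_eqVlt => /orP [/eqP ->|->]; [right|left].
all: have [Hj|->] : (j < n)%N \/ j = n by move: Hj'; rewrite leq_eqVlt => /orP [/eqP ->|->]; [right|left].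
- exact: (IH i j Hi Hj).
- exact: (proj1 (Inv_step IH Hi)).
- exact: (proj2 (Inv_step IH Hj)).
- split => _; [exact: lexx|exact: lo_refl].
Qed.

Lemma GE : exists e : nat -> rat, forall i j, le (y i) (y j) <-> e i <= e j.
Proof.
exists ee => i j; apply: (@Inv_all (maxn i j).+1); by rewrite ltnS ?leq_maxl ?leq_maxr.
Qed.
End GE.

Lemma GE' (T : Type) (le : T -> T -> Prop) (Hl : linear_order le) (y : nat -> T) :
  exists E : T -> rat, forall a b, (exists i, y i = a) -> (exists j, y j = b) ->
     (le a b <-> E a <= E b).
Proof.
have [e He] := GE Hl y.
pose E a := match excluded_middle_informative (exists i, y i = a) with
  | left H => e (proj1_sig (constructive_indefinite_description _ H)) | right _ => 0 end.
have HE : forall i, le (y i) (y (proj1_sig (constructive_indefinite_description _ (ex_intro (fun j => y j = y i) i erefl)))) by move=> i; destruct constructive_indefinite_description => /=; rewrite e0; exact: lo_refl.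
exists E => a b Ha Hb; rewrite /E.
destruct excluded_middle_informative as [H1|H1] => //.
destruct excluded_middle_informative as [H2|H2] => //.
destruct constructive_indefinite_description as [i Hi]; destruct constructive_indefinite_description as [j Hj] => /=.
by rewrite -He Hi Hj.
Qed.

End Part2.
Import Part2.

Module Part3.
Set Implicit Arguments. Unset Strict Implicit. Unset Printing Implicit Defensive.

Lemma list_max (T : Type) (le : T -> T -> Prop) (L : linear_order le) x l :
  exists m, List.In m (x :: l) /\ forall z, List.In z (x :: l) -> le z m.
Proof.
elim: l x => [|y l IH] x.
  exists x; split; [by left|move=> z [<-|[]]; exact: (lo_refl L _)].
have [m [Hm1 Hm2]] := IH y.
case: (lo_tot L x m) => H.
- exists m; split; first by right.
  move=> z [<-|Hz]; [exact: H|exact: Hm2].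
- exists x; split; first by left.
  move=> z [<-|Hz]; [exact: (lo_refl L _)|exact: (lo_trans L (Hm2 _ Hz) H)].
Qed.

Section Bichain.
Variables (X : Type) (le1 le2 : X -> X -> Prop).
Hypotheses (L1 : linear_order le1) (L2 : linear_order le2).

Definition Dset a b := fun x => le1 x a /\ le2 x b.
Definition valid a b := le2 a b /\ le1 b a.

Lemma valid_refl a : valid a a.
Proof. split; [exact: (lo_refl L2)|exact: (lo_refl L1)]. Qed.

Lemma D_closed a b : bc_closed le1 le2 (Dset a b).
Proof.
exists (fun x => le1 x a), (fun x => le2 x b); split; [|split].
- move=> x y Hy Hxy; exact: (lo_trans L1 Hxy Hy).
- move=> x y Hy Hxy; exact: (lo_trans L2 Hxy Hy).
- by move=> x.
Qed.

Lemma D_closure (F : X -> Prop) a b : valid a b -> F a -> F b ->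
  (forall x, F x -> Dset a b x) -> set_eq (bc_closure le1 le2 F) (Dset a b).
Proof.
move=> Hv Fa Fb HF x; split.
- move=> H; exact: (H _ (D_closed a b) HF).
- move=> [H1 H2] Z [I1 [I2 [HI1 [HI2 HZ]]]] HFZ; apply/HZ; split.
  + have /HZ [A _] := HFZ _ Fa; exact: HI1 A H1.
  + have /HZ [_ B] := HFZ _ Fb; exact: HI2 B H2.
Qed.

Lemma closure_empty (F : X -> Prop) : (forall x, ~ F x) -> forall x, ~ bc_closure le1 le2 F x.
Proof.
move=> HF x H; apply: (H (fun _ => False)).
- exists (fun _ => False), (fun _ => False); split; [by []|split; [by []|by move=> ?; tauto]].
- by move=> y /HF.
Qed.

Lemma D_in a b : valid a b -> Dset a b a /\ Dset a b b.
Proof. move=> [H1 H2]; split; split => //; [exact: (lo_refl L1)|exact: (lo_refl L2)]. Qed.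

Lemma compact_cases Z : bc_compact le1 le2 Z ->
  (forall x, ~ Z x) \/ exists a b, valid a b /\ set_eq Z (Dset a b).
Proof.
move=> [[|x l] HZ].
  left => y /HZ H; exact: (@closure_empty (fun y => List.In y [::]) (fun _ H => H) y H).
right.
have [a [Ha1 Ha2]] := list_max L1 x l.
have [b [Hb1 Hb2]] := list_max L2 x l.
exists a, b.
have Hv : valid a b by split; [exact: Hb2|exact: Ha2].
split => // y; rewrite HZ; apply: D_closure => // z Hz; split; [exact: Ha2|exact: Hb2].
Qed.

Lemma D_inj a b a' b' : valid a b -> valid a' b' -> set_eq (Dset a b) (Dset a' b') ->
  a = a' /\ b = b'.
Proof.
move=> Hv Hv' HD.
have [Da Db] := D_in Hv; have [Da' Db'] := D_in Hv'.
have [A1 _] := proj1 (HD a) Da; have [_ B1] := proj1 (HD b) Db.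
have [A2 _] := proj2 (HD a') Da'; have [_ B2] := proj2 (HD b') Db'.
split; [exact: (lo_anti L1 A1 A2)|exact: (lo_anti L2 B1 B2)].
Qed.

Lemma D_compact a b : valid a b -> bc_compact le1 le2 (Dset a b).
Proof.
move=> Hv; exists [:: a; b] => x; symmetry; apply: D_closure => //.
- by left.
- by right; left.
- have [Da Db] := D_in Hv; move=> z [<-|[<-|[]]] //.
Qed.

Definition ojoin (o o' : option (X * X)) : option (X * X) :=
  match o, o' with
  | None, _ => o'
  | _, None => o
  | Some (a, b), Some (a', b') => Some (maxo le1 a a', maxo le2 b b')
  end.

Section SP.
Variables (S' : JSL) (phi : S' -> X -> Prop).
Hypotheses (Hc : forall a, bc_compact le1 le2 (phi a))
  (Hs : forall Z, bc_compact le1 le2 Z -> exists a, set_eq (phi a) Z)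
  (Hi : forall a b, set_eq (phi a) (phi b) -> a = b)
  (Hj : forall a b, set_eq (phi (jjoin a b)) (bc_closure le1 le2 (fun x => phi a x \/ phi b x))).

Definition cpair (s : S') : option (X * X) :=
  match excluded_middle_informative (exists p : X * X, valid p.1 p.2 /\ set_eq (phi s) (Dset p.1 p.2)) with
  | left H => Some (proj1_sig (constructive_indefinite_description _ H))
  | right _ => None
  end.

Lemma cpair_spec s : match cpair s with
  | None => forall x, ~ phi s x
  | Some (a, b) => valid a b /\ set_eq (phi s) (Dset a b) end.
Proof.
rewrite /cpair; destruct excluded_middle_informative as [H|H].
- by case: constructive_indefinite_description => [[a b]].
- case: (compact_cases (Hc s)) => // -[a [b [Hv HD]]].
  exfalso; apply: H; by exists (a, b).
Qed.

Lemma cpair_Some s a b : valid a b -> set_eq (phi s) (Dset a b) -> cpair s = Some (a, b).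
Proof.
move=> Hv HD; have := cpair_spec s; case: (cpair s) => [[a' b']|].
- move=> [Hv' HD']; have [-> ->] := D_inj Hv Hv' (fun x => iff_trans (iff_sym (HD x)) (HD' x)) => //.
- move=> H; exfalso; apply: (H a); apply/HD; exact: (D_in Hv).1.
Qed.

Lemma cpair_None s : (forall x, ~ phi s x) -> cpair s = None.
Proof.
move=> H; have := cpair_spec s; case: (cpair s) => [[a b]|] // [Hv HD].
exfalso; apply: (H a); apply/HD; exact: (D_in Hv).1.
Qed.

Lemma cpair_inj s t : cpair s = cpair t -> s = t.
Proof.
move=> E; apply: Hi => x.
have := cpair_spec s; have := cpair_spec t; rewrite E.
case: (cpair t) => [[a b]|].
- move=> [_ H1] [_ H2]; rewrite H1 H2; tauto.
- move=> H1 H2; split => H; [exfalso; exact: H2 H|exfalso; exact: H1 H].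
Qed.

Lemma cpair_join s t : cpair (jjoin s t) = ojoin (cpair s) (cpair t).
Proof.
have Es := cpair_spec s; have Et := cpair_spec t.
move: Es Et; case: (cpair s) => [[a b]|]; case: (cpair t) => [[a' b']|] /=.
- move=> [Hv HD] [Hv' HD'].
  have Hv'' : valid (maxo le1 a a') (maxo le2 b b').
    split.
    + case: (maxo_case le1 a a') => ->.
      * apply: (lo_trans L2 (proj1 Hv)); exact: (maxo_ubl L2).
      * apply: (lo_trans L2 (proj1 Hv')); exact: (maxo_ubr L2).
    + case: (maxo_case le2 b b') => ->.
      * apply: (lo_trans L1 (proj2 Hv)); exact: (maxo_ubl L1).
      * apply: (lo_trans L1 (proj2 Hv')); exact: (maxo_ubr L1).
  apply: cpair_Some => // x; rewrite Hj; apply: D_closure => //.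
  + case: (maxo_case le1 a a') => ->; [left; apply/HD|right; apply/HD']; exact: (D_in _).1.
  + case: (maxo_case le2 b b') => ->; [left; apply/HD|right; apply/HD']; exact: (D_in _).2.
  + move=> z [/HD [A B]|/HD' [A B]]; split.
    * apply: (lo_trans L1 A); exact: (maxo_ubl L1).
    * apply: (lo_trans L2 B); exact: (maxo_ubl L2).
    * apply: (lo_trans L1 A); exact: (maxo_ubr L1).
    * apply: (lo_trans L2 B); exact: (maxo_ubr L2).
- move=> [Hv HD] Ht; apply: cpair_Some => // x; rewrite Hj; apply: D_closure => //.
  + left; apply/HD; exact: (D_in _).1.
  + left; apply/HD; exact: (D_in _).2.
  + by move=> z [/HD|/Ht].
- move=> Hs' [Hv HD]; apply: cpair_Some => // x; rewrite Hj; apply: D_closure => //.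
  + right; apply/HD; exact: (D_in _).1.
  + right; apply/HD; exact: (D_in _).2.
  + by move=> z [/Hs'|/HD].
- move=> Hs' Ht; apply: cpair_None => x; rewrite Hj; apply: closure_empty.
  by move=> z [/Hs'|/Ht].
Qed.

Lemma ex_Elt a b : exists s, valid a b -> cpair s = Some (a, b).
Proof.
case: (classic (valid a b)) => Hv.
- have [s Hs'] := Hs (D_compact Hv); exists s => _; exact: cpair_Some.
- have [s _] := Hs (Z := bc_closure le1 le2 (fun y => List.In y [::])) (ex_intro _ [::] (fun x => iff_refl _)).
  by exists s.
Qed.

Definition Elt a b : S' := proj1_sig (constructive_indefinite_description _ (ex_Elt a b)).
Lemma Elt_spec a b : valid a b -> cpair (Elt a b) = Some (a, b).
Proof. rewrite /Elt; by case: constructive_indefinite_description. Qed.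

Lemma jjoin_Elt a b a' b' : valid a b -> valid a' b' ->
  cpair (jjoin (Elt a b) (Elt a' b')) = Some (maxo le1 a a', maxo le2 b b').
Proof. by move=> H H'; rewrite cpair_join !Elt_spec. Qed.

End SP.
End Bichain.

End Part3.
Import Part3.

Module Part4.
Set Implicit Arguments. Unset Strict Implicit. Unset Printing Implicit Defensive.
Import Order.TTheory GRing.Theory Num.Theory.

Section OmegaNat.
Variable P : nat -> Prop.
Hypothesis HP : forall N, exists n, P n /\ (N < n)%N.

Lemma exP0 : exists n, bP (P n) && (0 <= n)%N.
Proof. have [n [Hn _]] := HP 0; exists n; by rewrite (proj2 (bPP _) Hn). Qed.
Lemma exPS N : exists n, bP (P n) && (N < n)%N.
Proof. have [n [Hn H]] := HP N; exists n; by rewrite (proj2 (bPP _) Hn) H. Qed.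

Fixpoint gom n : nat := match n with
  | 0 => ex_minn exP0
  | n'.+1 => ex_minn (exPS (gom n'))
  end.

Lemma gom_P n : P (gom n).
Proof.
case: n => [|n] /=.
- case: ex_minnP => m /andP [/bPP H _] _ //.
- case: ex_minnP => m /andP [/bPP H _] _ //.
Qed.

Lemma gom_lt n : (gom n < gom n.+1)%N.
Proof. rewrite /=; case: ex_minnP => m /andP [_ H] _ //. Qed.

Lemma gom_mono n m : (n <= m)%N <-> (gom n <= gom m)%N.
Proof.
have inc : forall a b, (a < b)%N -> (gom a < gom b)%N.
  move=> a b; elim: b => // b IH; rewrite ltnS leq_eqVlt => /orP [/eqP ->|H].
  - exact: gom_lt.
  - exact: ltn_trans (IH H) (gom_lt b).
split => H.
- move: H; rewrite leq_eqVlt => /orP [/eqP ->//|H]; exact: ltnW (inc _ _ H).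
- rewrite leqNgt; apply/negP => H'; have := inc _ _ H'; by rewrite ltnNge H.
Qed.

Lemma gom_ge n : (n <= gom n)%N.
Proof. elim: n => // n IH; exact: leq_ltn_trans IH (gom_lt n). Qed.

Lemma gom_surj x : P x -> exists n, gom n = x.
Proof.
move=> Hx.
have step : forall j, (gom j <= x)%N -> gom j = x \/ (gom j.+1 <= x)%N.
  move=> j Hj; case: (ltngtP (gom j) x) Hj => // H _; last by left.
  right; rewrite /=; case: ex_minnP => m _ Hm; apply: Hm.
  by rewrite (proj2 (bPP _) Hx) H.
have H0 : (gom 0 <= x)%N.
  rewrite /=; case: ex_minnP => m _ Hm; apply: Hm; by rewrite (proj2 (bPP _) Hx).
apply: NNPP => Hn.
have : forall j, (gom j <= x)%N.
  elim => // j IH; case: (step j IH) => // E; exfalso; apply: Hn; by exists j.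
move/(_ x.+1) => H; have := gom_ge x.+1; lia.
Qed.

Lemma omega_nat : exists g : nat -> nat,
  (forall n m, (n <= m)%N <-> (g n <= g m)%N) /\ (forall x, P x <-> exists n, g n = x).
Proof.
exists gom; split; first exact: gom_mono.
move=> x; split; [exact: gom_surj|move=> [n <-]; exact: gom_P].
Qed.
End OmegaNat.

Lemma maxo_leq a b : maxo (fun m n => (m <= n)%N) a b = maxn a b.
Proof.
rewrite /maxo; destruct excluded_middle_informative as [H|H].
- by apply/esym/maxn_idPr.
- apply/esym/maxn_idPl; rewrite leqNgt; apply/negP => H'; apply: H; exact: ltnW.
Qed.

Lemma linear_leq : linear_order (fun m n : nat => (m <= n)%N).
Proof.
split; [by []|split; [move=> x y z; exact: leq_trans|split]].
- move=> x y H1 H2; apply/eqP; by rewrite eqn_leq H1 H2.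
- move=> x y; case: (leqP x y) => H; [by left|right; exact: ltnW].
Qed.

Local Open Scope ring_scope.

Lemma h_inj (X : Type) (le2 : X -> X -> Prop) (h : rat -> X) :
  (forall q r, q <= r <-> le2 (h q) (h r)) -> injective h.
Proof.
move=> Hh q r E; apply/eqP; rewrite eq_le; apply/andP; split; apply/Hh; rewrite E;
  apply/Hh; exact: lexx.
Qed.

Section K.
Variables (X : Type) (le1 le2 : X -> X -> Prop).
Hypotheses (L1 : linear_order le1) (L2 : linear_order le2).
Variable g1 : nat -> X.
Hypothesis Hg1 : forall n m, (n <= m)%N <-> le1 (g1 n) (g1 m).
Hypothesis Hg1s : forall x, exists n, g1 n = x.
Variable h : rat -> X.
Hypothesis Hh : forall q r, q <= r <-> le2 (h q) (h r).
Variables (S' : JSL) (phi : S' -> X -> Prop).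
Hypotheses (Hc : forall a, bc_compact le1 le2 (phi a))
  (Hs : forall Z, bc_compact le1 le2 Z -> exists a, set_eq (phi a) Z)
  (Hi : forall a b, set_eq (phi a) (phi b) -> a = b)
  (Hj : forall a b, set_eq (phi (jjoin a b)) (bc_closure le1 le2 (fun x => phi a x \/ phi b x))).
Variables (Z : Type) (leZ : Z -> Z -> Prop).
Hypothesis LZ : linear_order leZ.
Variable F : S' -> (nat * Z)%type.
Hypothesis HFi : forall x y, F x = F y -> x = y.
Hypothesis HFj : forall x y, F (jjoin x y) = (maxn (F x).1 (F y).1, maxo leZ (F x).2 (F y).2).
Hypothesis HFl : forall N, exists L : list (nat * Z), forall x, ((F x).1 <= N)%N -> List.In (F x) L.

Local Notation E := (Elt L1 L2 Hc Hs).
Local Notation cp := (cpair le1 le2 phi).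

Definition idx (x : X) : nat := proj1_sig (constructive_indefinite_description _ (Hg1s x)).
Lemma idxK x : g1 (idx x) = x.
Proof. rewrite /idx; by case: constructive_indefinite_description. Qed.
Lemma idx_le a b : le1 a b <-> (idx a <= idx b)%N.
Proof. by rewrite Hg1 !idxK. Qed.
Lemma idx_inj a b : idx a = idx b -> a = b.
Proof. by move=> E; rewrite -(idxK a) E idxK. Qed.

Lemma Ejoin_le a b a' b' : valid le1 le2 a b -> valid le1 le2 a' b' ->
  (jjoin (E a b) (E a' b') = E a' b' <-> le1 a a' /\ le2 b b').
Proof.
move=> Hv Hv'; split.
- move=> Heq; have := jjoin_Elt L1 L2 Hc Hs Hj Hv Hv'; rewrite Heq Elt_spec // => -[E1 E2].
  split; [exact: (maxo_eq_r L1 (esym E1))|exact: (maxo_eq_r L2 (esym E2))].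
- move=> [H1 H2]; apply: (cpair_inj L1 L2 Hc Hi).
  by rewrite (jjoin_Elt L1 L2 Hc Hs Hj Hv Hv') Elt_spec // maxo_r // maxo_r.
Qed.

Lemma Fjoin_le x y : jjoin x y = y <-> ((F x).1 <= (F y).1)%N /\ leZ (F x).2 (F y).2.
Proof.
split.
- move=> Heq; have E := HFj x y; rewrite Heq in E.
  have /= E1 := congr1 fst E; have /= E2 := congr1 snd E; split.
  + by rewrite E1 leq_maxl.
  + exact: (maxo_eq_r LZ (esym E2)).
- move=> [H1 H2]; apply: HFi; rewrite HFj (maxn_idPr H1) maxo_r //; by case: (F y).
Qed.

Lemma G1_inj (r : rat) : forall k k', r - 1 - k%:R = r - 1 - k'%:R -> k = k'.
Proof. move=> k k' Heq; apply/eqP; rewrite -(eqr_nat rat); apply/eqP; lra. Qed.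

Lemma stepex (r : rat) (C B : nat) : exists q, q < r /\ (C < idx (h q))%N /\
   (idx (h r) < idx (h q))%N /\ (B < (F (E (h q) (h r))).1)%N.
Proof.
pose M := maxn C (idx (h r)).
have [LB HLB] := HFl B.
pose Phi q := if (idx (h q) <= M)%N then inl (idx (h q)) else inr (F (E (h q) (h r))).
pose P q := (idx (h q) <= M)%N \/ ((F (E (h q) (h r))).1 <= B)%N.
have Hvk : forall q, q < r -> (M < idx (h q))%N -> valid le1 le2 (h q) (h r).
  move=> q Hq HM; split; [apply/Hh; exact: ltW|apply/idx_le].
  apply: ltnW; apply: leq_ltn_trans HM; exact: leq_maxr.
have Hlt : forall k : nat, r - 1 - k%:R < r.
  move=> k; have : (0 : rat) <= k%:R by exact: ler0n. lra.
have [k Hk] : exists k : nat, ~ P (r - 1 - k%:R).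
  apply: (@escape _ _ (fun k : nat => r - 1 - k%:R) Phi P
   (List.app (List.map inl (List.seq 0 M.+1)) (List.map inr LB))).
  - move=> k k'; rewrite /Phi.
    case: ifP => H1; case: ifP => H2 // E1.
    + case: E1 => /idx_inj /(h_inj Hh); exact: G1_inj.
    + case: E1 => /HFi /(congr1 cp); rewrite !Elt_spec;
        try (apply: Hvk; [exact: Hlt| by rewrite ltnNge ?H1 ?H2]).
      case=> /(h_inj Hh); exact: G1_inj.
  - move=> q [H|H]; apply/List.in_app_iff; rewrite /Phi.
    + rewrite H; left; apply/List.in_map_iff; exists (idx (h q)); split => //.
      apply/List.in_seq; move/ssrnat.leP: H; lia.
    + case: ifP => H'.
      * left; apply/List.in_map_iff; exists (idx (h q)); split => //.
        apply/List.in_seq; move/ssrnat.leP: H'; lia.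
      * right; apply/List.in_map_iff; exists (F (E (h q) (h r))); split => //; exact: HLB.
exists (r - 1 - k%:R); split; first exact: Hlt.
  move: Hk; rewrite /P => /not_or_and [/negP H1 /negP H2].
  rewrite -!ltnNge in H1 H2; split; [|split] => //.
  + exact: leq_ltn_trans (leq_maxl _ _) H1.
  + exact: leq_ltn_trans (leq_maxr _ _) H1.
Qed.

Definition stp (r : rat) (C B : nat) : rat := proj1_sig (constructive_indefinite_description _ (stepex r C B)).
Lemma stp_spec r C B : stp r C B < r /\ (C < idx (h (stp r C B)))%N /\
   (idx (h r) < idx (h (stp r C B)))%N /\ (B < (F (E (h (stp r C B)) (h r))).1)%N.
Proof. rewrite /stp; by case: constructive_indefinite_description. Qed.

Fixpoint st (n : nat) : nat * nat := match n with
  | 0 => (0%N, 0%N)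
  | n'.+1 => match (unpickle n' : option rat) with
     | Some r => let q := stp r (st n').1 (st n').2 in (idx (h q), (F (E (h q) (h r))).1)
     | None => st n' end
  end.

Lemma st_step n : ((st n).1 <= (st n.+1).1)%N /\ ((st n).2 <= (st n.+1).2)%N.
Proof.
rewrite /=; case: (unpickle n : option rat) => [r|]; last by [].
have [_ [H1 [_ H2]]] := stp_spec r (st n).1 (st n).2; split => /=; exact: ltnW.
Qed.

Lemma st_mono n m : (n <= m)%N -> ((st n).1 <= (st m).1)%N /\ ((st n).2 <= (st m).2)%N.
Proof.
elim: m => [|m IH]; first by rewrite leqn0 => /eqP ->.
rewrite leq_eqVlt => /orP [/eqP ->|H]; first by [].
have [A B] := IH H; have [C D] := st_step m; split; [exact: leq_trans A C|exact: leq_trans B D].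
Qed.

Definition qr (r : rat) : rat := stp r (st (pickle r)).1 (st (pickle r)).2.
Definition wr (r : rat) : S' := E (h (qr r)) (h r).

Lemma st_pick (r : rat) : st (pickle r).+1 = (idx (h (qr r)), (F (wr r)).1).
Proof. by rewrite /= pickleK. Qed.

Lemma wr_valid (r : rat) : valid le1 le2 (h (qr r)) (h r).
Proof.
have [H1 [_ [H2 _]]] := stp_spec r (st (pickle r)).1 (st (pickle r)).2.
split; [apply/Hh; exact: ltW|apply/idx_le; exact: ltnW].
Qed.

Lemma nu_lt (r s : rat) : (pickle r < pickle s)%N ->
  (idx (h (qr r)) < idx (h (qr s)))%N /\ ((F (wr r)).1 < (F (wr s)).1)%N.
Proof.
move=> H; have [A B] := st_mono H; rewrite st_pick /= in A B.
have [_ [C [_ D]]] := stp_spec s (st (pickle s)).1 (st (pickle s)).2.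
split; [exact: leq_ltn_trans A C|exact: leq_ltn_trans B D].
Qed.

Definition beta (r : rat) := (F (wr r)).2.

Lemma K1 (r s : rat) : (pickle r < pickle s)%N -> r < s -> leZ (beta r) (beta s).
Proof.
move=> Hn Hrs; have [A B] := nu_lt Hn.
have : jjoin (wr r) (wr s) = wr s.
  apply/(Ejoin_le (wr_valid r) (wr_valid s)); split; [apply/idx_le; exact: ltnW|apply/Hh; exact: ltW].
by move/Fjoin_le => [].
Qed.

Lemma K2 (r s : rat) : (pickle r < pickle s)%N -> s < r -> ~ leZ (beta r) (beta s).
Proof.
move=> Hn Hsr Hle; have [A B] := nu_lt Hn.
have : jjoin (wr r) (wr s) = wr s by apply/Fjoin_le; split => //; exact: ltnW.
move/(Ejoin_le (wr_valid r) (wr_valid s)) => [_ /Hh H].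
by move: Hsr; rewrite ltNge H.
Qed.

Lemma G2_inj (r s : rat) : r < s -> forall k k' : nat,
  r + (s - r) / k.+2%:R = r + (s - r) / k'.+2%:R -> k = k'.
Proof.
move=> Hrs k k' /addrI /mulfI H.
have Hd : s - r != 0 by rewrite subr_eq0 gt_eqF.
move: (H Hd) => /invr_inj /eqP; rewrite eqr_nat => /eqP [->] //.
Qed.

Lemma G2_in (r s : rat) (k : nat) : r < s -> r < r + (s - r) / k.+2%:R < s.
Proof.
move=> Hrs; have Hk : (1 : rat) < k.+2%:R by rewrite ltr1n.
have Hd : 0 < s - r by rewrite subr_gt0.
have H1 : 0 < (s - r) / k.+2%:R by apply: divr_gt0 => //; lra.
have H2 : (s - r) / k.+2%:R < s - r.
  rewrite ltr_pdivrMr; last lra.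
  have : (s - r) * 1 < (s - r) * k.+2%:R by rewrite ltr_pM2l.
  by rewrite mulr1.
move: H1 H2; set u := (s - r) / k.+2%:R => H1 H2; apply/andP; split; lra.
Qed.

Lemma K3 (r s : rat) : r < s -> ~ leZ (beta s) (beta r).
Proof.
move=> Hrs Hle.
have [k Hk] : exists k : nat, ~ (pickle (r + (s - r) / k.+2%:R)%R <= pickle s)%N.
  apply: (@escape _ _ (fun k : nat => r + (s - r) / k.+2%:R) pickle
   (fun t => (pickle t <= pickle s)%N) (List.seq 0 (pickle s).+1)).
  - move=> k k' /pickle_rat_inj; exact: G2_inj.
  - move=> t H; apply/List.in_seq; move/ssrnat.leP: H; lia.
set t := r + (s - r) / k.+2%:R in Hk.
have /andP [Hrt Hts] : r < t < s by exact: G2_in.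
have Hst : (pickle s < pickle t)%N by rewrite ltnNge; apply/negP.
have Nst := K2 Hst Hts.
have Hrt' : leZ (beta r) (beta t).
  case: (ltngtP (pickle r) (pickle t)) => H.
  - exact: K1 H Hrt.
  - exact: (lo_not LZ (K2 H Hrt)).
  - by move: Hrt; rewrite (pickle_rat_inj H) ltxx.
apply: Nst; exact: (lo_trans LZ Hle Hrt').
Qed.

Lemma K_main : (exists hq : rat -> Z, (forall q, exists x, (F x).2 = hq q) /\
                  forall q r, q <= r <-> leZ (hq q) (hq r)) /\
               forall N, exists x, (N < (F x).1)%N.
Proof.
split.
- exists beta; split; first by move=> q; exists (wr q).
  move=> q r; split.
  + rewrite le_eqVlt => /orP [/eqP ->|H]; first exact: (lo_refl LZ).
    exact: (lo_not LZ (K3 H)).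
  + move=> H; rewrite leNgt; apply/negP => H'; exact: (K3 H') H.
- move=> N; have [_ [_ [_ H]]] := stp_spec 0 0 N; by eexists; exact: H.
Qed.
End K.

End Part4.
Import Part4.

Module Part5.
Set Implicit Arguments. Unset Strict Implicit. Unset Printing Implicit Defensive.
Import Order.TTheory GRing.Theory Num.Theory.

Definition natC : Chain := {| ccar := nat; cle := fun m n => (m <= n)%N; cle_linear := linear_leq |}.

Section Opt.
Variables (X : Type) (le2 : X -> X -> Prop).
Hypothesis L2 : linear_order le2.
Definition ole (o o' : option X) : Prop :=
  match o, o' with None, _ => True | Some _, None => False | Some a, Some b => le2 a b end.
Lemma ole_linear : linear_order ole.
Proof.
split; [|split; [|split]].
- case=> //= a; exact: (lo_refl L2).
- case=> [a|] [b|] [c|] //=; exact: (lo_trans L2).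
- case=> [a|] [b|] //= H1 H2; by rewrite (lo_anti L2 H1 H2).
- case=> [a|] [b|] /=; try tauto; exact: (lo_tot L2).
Qed.
Definition optC : Chain := {| ccar := option X; cle := ole; cle_linear := ole_linear |}.
End Opt.

Section Fwd.
Variables (X : Type) (le1 le2 : X -> X -> Prop).
Hypotheses (L1 : linear_order le1) (L2 : linear_order le2).
Variable g1 : nat -> X.
Hypothesis Hg1 : forall n m, (n <= m)%N <-> le1 (g1 n) (g1 m).
Hypothesis Hg1s : forall x, exists n, g1 n = x.
Variable h : rat -> X.
Hypothesis Hh : forall q r, (q <= r)%R <-> le2 (h q) (h r).
Variables (S' : JSL) (phi : S' -> X -> Prop).
Hypotheses (Hc : forall a, bc_compact le1 le2 (phi a))
  (Hs : forall Z, bc_compact le1 le2 Z -> exists a, set_eq (phi a) Z)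
  (Hi : forall a b, set_eq (phi a) (phi b) -> a = b)
  (Hj : forall a b, set_eq (phi (jjoin a b)) (bc_closure le1 le2 (fun x => phi a x \/ phi b x))).

Local Notation cp := (cpair le1 le2 phi).
Local Notation ix := (idx Hg1s).

Definition coordF (t : S') : nat * option X :=
  match cp t with None => (0%N, None) | Some (a, b) => ((ix a).+1, Some b) end.

Lemma coordF_join t t' : coordF (jjoin t t') =
  (maxn (coordF t).1 (coordF t').1, maxo (ole le2) (coordF t).2 (coordF t').2).
Proof.
rewrite /coordF (cpair_join L1 L2 Hc Hj).
case: (cp t) => [[a b]|]; case: (cp t') => [[a' b']|] //=.
- congr pair.
  + rewrite -maxo_leq; apply: (maxo_map (m := fun a => (ix a).+1)).
    rewrite (idx_le Hg1 Hg1s); by [].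
  + by apply: (maxo_map (m := fun b => Some b)).
- rewrite maxn0 maxo_l //; exact: ole_linear.
- by rewrite max0n maxo_r.
- by rewrite maxo_id.
Qed.

Lemma coordF_inj t t' : coordF t = coordF t' -> t = t'.
Proof.
move=> E; apply: (cpair_inj L1 L2 Hc Hi); move: E; rewrite /coordF.
case: (cp t) => [[a b]|]; case: (cp t') => [[a' b']|] //= [E1 E2].
by rewrite (idx_inj E1) E2.
Qed.

Lemma coordF_col t : List.In (coordF t).2
  (None :: List.map (fun i => Some (g1 i)) (List.seq 0 (coordF t).1)).
Proof.
have := cpair_spec L1 L2 Hc t; rewrite /coordF.
case: (cp t) => [[a b]|]; last by left.
move=> [[_ Hba] _]; apply: List.in_cons; apply/List.in_map_iff; exists (ix b); split; first by rewrite idxK.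
apply/List.in_seq; have := proj1 (idx_le Hg1 Hg1s b a) Hba; move/ssrnat.leP => ?; simpl; lia.
Qed.

Lemma coordF_low N : exists L : list (nat * option X), forall t,
  ((coordF t).1 <= N)%N -> List.In (coordF t) L.
Proof.
exists (List.list_prod (List.seq 0 N.+1) (None :: List.map (fun i => Some (g1 i)) (List.seq 0 N.+1))).
move=> t HN; have := coordF_col t; case: (coordF t) HN => n o HN Ho.
change ((n, o).1) with n in HN; change ((n, o).1) with n in Ho; change ((n, o).2) with o in Ho.
apply: List.in_prod; first by apply/List.in_seq; move/ssrnat.leP: HN => ?; lia.
case: Ho => [<-|]; first by left.
move=> /List.in_map_iff [i [<- /List.in_seq Hii]]; apply: List.in_cons; apply/List.in_map_iff; exists i; split => //.
apply/List.in_seq; move/ssrnat.leP: HN => ?; lia.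
Qed.

Lemma forward_main (S : JSL) (u : S -> S') (w : S' -> S) :
  (forall a b, u a = u b -> a = b) -> join_preserving (@jle S') u ->
  (forall a b, w a = w b -> a = b) -> join_preserving (@jle S) w ->
  exists (C1 C2 : Chain) (f : S -> (C1 * C2)%type),
    (forall a b, f a = f b -> a = b) /\
    join_preserving (@prod_le C1 C2) f /\
    has_order_type_omega (@cle C1) (fun x => exists s, (f s).1 = x) /\
    ~ order_scattered (@cle C2) (fun y => exists s, (f s).2 = y) /\
    (forall x : C1, (exists s, (f s).1 = x) ->
       exists l : list C2, forall y : C2, (exists s, f s = (x, y)) -> List.In y l).
Proof.
move=> Hui Huj Hwi Hwj.
have Huj' : forall a b, u (jjoin a b) = jjoin (u a) (u b) by move=> a b; apply: lub_jjoin; exact: Huj.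
have Hwj' : forall a b, w (jjoin a b) = jjoin (w a) (w b) by move=> a b; apply: lub_jjoin; exact: Hwj.
pose F := fun x => coordF (u (w x)).
have HFi : forall x y, F x = F y -> x = y by move=> x y /coordF_inj /Hui /Hwi.
have HFj : forall x y, F (jjoin x y) = (maxn (F x).1 (F y).1, maxo (ole le2) (F x).2 (F y).2).
  by move=> x y; rewrite /F Hwj' Huj' coordF_join.
have HFl : forall N, exists L : list (nat * option X), forall x, ((F x).1 <= N)%N -> List.In (F x) L.
  move=> N; have [L HL] := coordF_low N; exists L => x; exact: HL.
have [[hq [Hq1 Hq2]] Hunb] := K_main L1 L2 Hg1 Hg1s Hh Hc Hs Hi Hj (ole_linear L2) HFi HFj HFl.
exists natC, (optC L2), (fun s => coordF (u s)); split; [|split; [|split; [|split]]].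
- by move=> a b /coordF_inj /Hui.
- move=> a b; rewrite Huj' coordF_join -maxo_leq; exact: (prod_lub (C1 := natC) (C2 := optC L2)).
- have HP : forall N, exists n, (exists s, (coordF (u s)).1 = n) /\ (N < n)%N.
    move=> N; have [x Hx] := Hunb N; exists (F x).1; split => //; by exists (w x).
  have [g [Hg1' Hg2']] := omega_nat HP.
  by exists g.
- move=> H; apply: H; exists hq; split => //.
  move=> q; have [x Hx] := Hq1 q; exists (w x); exact: Hx.
- move=> x _; exists (None :: List.map (fun i => Some (g1 i)) (List.seq 0 x)).
  move=> y [s Hs']; have := coordF_col (u s); by rewrite Hs'.
Qed.
End Fwd.

End Part5.
Import Part5.

Module Part6.
Set Implicit Arguments. Unset Strict Implicit. Unset Printing Implicit Defensive.
Import Order.TTheory GRing.Theory Num.Theory.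

Lemma sinc_mono (p : nat -> nat) : (forall n, (p n < p n.+1)%N) ->
  forall n m, (n <= m)%N <-> (p n <= p m)%N.
Proof.
move=> Hp.
have inc : forall a b, (a < b)%N -> (p a < p b)%N.
  move=> a b; elim: b => // b IH; rewrite ltnS leq_eqVlt => /orP [/eqP ->|H].
  - exact: Hp.
  - exact: ltn_trans (IH H) (Hp b).
move=> n m; split => H.
- move: H; rewrite leq_eqVlt => /orP [/eqP ->//|H]; exact: ltnW (inc _ _ H).
- rewrite leqNgt; apply/negP => H'; have := inc _ _ H'; by rewrite ltnNge H.
Qed.

Lemma sinc_inj (p : nat -> nat) : (forall n, (p n < p n.+1)%N) ->
  forall n m, p n = p m -> n = m.
Proof.
move=> Hp n m E; apply/eqP; rewrite eqn_leq; apply/andP; split; apply/(sinc_mono Hp); by rewrite E.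
Qed.

Local Open Scope ring_scope.

Definition phi0 (r : rat) : rat := r / (1 + `|r|).
Lemma phi0_aux (q r : rat) : q <= r -> phi0 q <= phi0 r.
Proof.
move=> H; rewrite /phi0.
have Hq : 0 < 1 + `|q| by rewrite ltr_pwDl // normr_ge0.
have Hr : 0 < 1 + `|r| by rewrite ltr_pwDl // normr_ge0.
rewrite ler_pdivrMr // mulrAC ler_pdivlMr //.
case: (leP 0 q) => Hq0; case: (leP 0 r) => Hr0;
  rewrite ?(ger0_norm Hq0) ?(ger0_norm Hr0) ?(ltr0_norm Hq0) ?(ltr0_norm Hr0); nra.
Qed.
Lemma phi0_gt (r : rat) : -1 < phi0 r.
Proof.
rewrite /phi0.
have Hr : 0 < 1 + `|r| by rewrite ltr_pwDl // normr_ge0.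
rewrite ltr_pdivlMr //.
case: (leP 0 r) => Hr0; rewrite ?(ger0_norm Hr0) ?(ltr0_norm Hr0); nra.
Qed.
Lemma phi0_strict (q r : rat) : q < r -> phi0 q < phi0 r.
Proof.
move=> H; rewrite /phi0.
have Hq : 0 < 1 + `|q| by rewrite ltr_pwDl // normr_ge0.
have Hr : 0 < 1 + `|r| by rewrite ltr_pwDl // normr_ge0.
rewrite ltr_pdivrMr // mulrAC ltr_pdivlMr //.
case: (leP 0 q) => Hq0; case: (leP 0 r) => Hr0;
  rewrite ?(ger0_norm Hq0) ?(ger0_norm Hr0) ?(ltr0_norm Hq0) ?(ltr0_norm Hr0); nra.
Qed.
Lemma phi0_mono (q r : rat) : q <= r <-> phi0 q <= phi0 r.
Proof.
split; first exact: phi0_aux.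
move=> H; rewrite leNgt; apply/negP => H'.
have := @phi0_strict r q H'; by rewrite ltNge H.
Qed.

Lemma foldr_maxn_ge (T : Type) (m : T -> nat) (l : list T) c :
  List.In c l -> (m c <= foldr maxn 0 (List.map m l))%N.
Proof.
elim: l => // a l IH [<-|H] /=; first exact: leq_maxl.
exact: leq_trans (IH H) (leq_maxr _ _).
Qed.

Section Bwd.
Variables (X : Type) (le1 le2 : X -> X -> Prop).
Hypotheses (L1 : linear_order le1) (L2 : linear_order le2).
Variable g1 : nat -> X.
Hypothesis Hg1 : forall n m, (n <= m)%N <-> le1 (g1 n) (g1 m).
Hypothesis Hg1s : forall x, exists n, g1 n = x.
Variable h : rat -> X.
Hypothesis Hh : forall q r, (q <= r)%R <-> le2 (h q) (h r).
Variables (S' : JSL) (phi : S' -> X -> Prop).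
Hypotheses (Hc : forall a, bc_compact le1 le2 (phi a))
  (Hs : forall Z, bc_compact le1 le2 Z -> exists a, set_eq (phi a) Z)
  (Hi : forall a b, set_eq (phi a) (phi b) -> a = b)
  (Hj : forall a b, set_eq (phi (jjoin a b)) (bc_closure le1 le2 (fun x => phi a x \/ phi b x))).

Variables (S : JSL) (C1 C2 : Chain) (f : S -> (C1 * C2)%type).
Hypotheses (Hfi : forall a b, f a = f b -> a = b) (Hfj : join_preserving (@prod_le C1 C2) f).
Variable g : nat -> C1.
Hypothesis Hg : forall n m, (n <= m)%N <-> cle (g n) (g m).
Hypothesis HgA : forall x, (exists s, (f s).1 = x) <-> exists n, g n = x.
Variable h2 : rat -> C2.
Hypotheses (Hh2A : forall q, exists s, (f s).2 = h2 q) (Hh2 : forall q r, (q <= r)%R <-> cle (h2 q) (h2 r)).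
Hypothesis Hcol : forall x : C1, (exists s, (f s).1 = x) ->
       exists l : list C2, forall y : C2, (exists s, f s = (x, y)) -> List.In y l.

Local Notation E := (Elt L1 L2 Hc Hs).
Local Notation cp := (cpair le1 le2 phi).
Local Notation ix := (idx Hg1s).
Local Notation cle1 := (@cle C1).
Local Notation cle2 := (@cle C2).
Let LC1 := cle_linear C1.
Let LC2 := cle_linear C2.

Lemma fJ s t : f (jjoin s t) = (maxo cle1 (f s).1 (f t).1, maxo cle2 (f s).2 (f t).2).
Proof. exact: prod_lub_eq (Hfj s t). Qed.

Definition i1 (x : C1) : nat :=
  match excluded_middle_informative (exists n, g n = x) with
  | left H => proj1_sig (constructive_indefinite_description _ H) | right _ => 0%N end.
Lemma i1K s : g (i1 (f s).1) = (f s).1.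
Proof.
rewrite /i1; destruct excluded_middle_informative as [H|H].
- by case: constructive_indefinite_description.
- exfalso; apply: H; apply/HgA; by exists s.
Qed.
Lemma g_inj n m : g n = g m -> n = m.
Proof.
move=> E'; apply/eqP; rewrite eqn_leq; apply/andP; split; apply/Hg; rewrite E'; exact: (lo_refl LC1).
Qed.
Lemma cle1_i1 s t : cle1 (f s).1 (f t).1 <-> (i1 (f s).1 <= i1 (f t).1)%N.
Proof. by rewrite Hg !i1K. Qed.

Lemma colex n : exists l : list C2, forall y, (exists s, f s = (g n, y)) -> List.In y l.
Proof. apply: Hcol; apply/HgA; by exists n. Qed.
Definition col n : list C2 := proj1_sig (constructive_indefinite_description _ (colex n)).
Lemma col_f s : List.In (f s).2 (col (i1 (f s).1)).
Proof.
rewrite /col; case: constructive_indefinite_description => l Hl /=; apply: Hl.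
exists s; by rewrite i1K -surjective_pairing.
Qed.

Definition yy (k : nat) : C2 :=
  match (unpickle k : option (nat * nat)) with
  | Some (n, j) => List.nth j (col n) (h2 0)
  | None => h2 0 end.
Lemma yy_col n c : List.In c (col n) -> exists k, yy k = c.
Proof.
move=> /(List.In_nth _ _ (h2 0)) [j [_ Hjj]]; exists (pickle (n, j)); by rewrite /yy pickleK.
Qed.
Lemma yy_f s : exists k, yy k = (f s).2.
Proof. exact: yy_col (col_f s). Qed.

Definition eC : C2 -> rat := proj1_sig (constructive_indefinite_description _ (GE' LC2 yy)).
Lemma eC_spec a b : (exists i, yy i = a) -> (exists j, yy j = b) -> (cle2 a b <-> eC a <= eC b).
Proof. rewrite /eC; case: constructive_indefinite_description => e He /=; exact: He. Qed.

Definition bX (c : C2) : X := h (eC c).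
Lemma bX_le s t : cle2 (f s).2 (f t).2 <-> le2 (bX (f s).2) (bX (f t).2).
Proof. rewrite -Hh; apply: eC_spec; exact: yy_f. Qed.

Definition Mb n : nat := foldr maxn 0%N (List.map (fun c => ix (bX c)) (col n)).

Lemma G1_inj' (r : rat) : forall k k', r - 1 - k%:R = r - 1 - k'%:R -> k = k'.
Proof. move=> k k' Heq; apply/eqP; rewrite -(eqr_nat rat); apply/eqP; lra. Qed.

Lemma pickex n (M : nat) : exists q, (forall c, List.In c (col n) -> q < eC c) /\ (M < ix (h q))%N.
Proof.
have [v Hv] := rat_below (List.map eC (col n)).
have [k Hk] : exists k : nat, ~ (ix (h (v - 1 - k%:R)) <= M)%N.
  apply: (@escape _ _ (fun k : nat => v - 1 - k%:R) h (fun q => (ix (h q) <= M)%N)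
     (List.map g1 (List.seq 0 M.+1))).
  - move=> k k' /(h_inj Hh); exact: G1_inj'.
  - move=> q H; apply/List.in_map_iff; exists (ix (h q)); split; first exact: idxK.
    apply/List.in_seq; move/ssrnat.leP: H => ?; lia.
exists (v - 1 - k%:R); split; last by rewrite ltnNge; apply/negP.
move=> c Hc'; have := Hv (eC c) (List.in_map _ _ _ Hc').
have : (0 : rat) <= k%:R by exact: ler0n. lra.
Qed.

Definition pk n M : rat := proj1_sig (constructive_indefinite_description _ (pickex n M)).
Lemma pk_spec n M : (forall c, List.In c (col n) -> pk n M < eC c) /\ (M < ix (h (pk n M)))%N.
Proof. rewrite /pk; by case: constructive_indefinite_description. Qed.

Fixpoint aq (n : nat) : rat := match n with
  | 0 => pk 0 (Mb 0)
  | n'.+1 => pk n'.+1 (maxn (Mb n'.+1) (ix (h (aq n'))))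
  end.

Lemma aq_spec n : (forall c, List.In c (col n) -> aq n < eC c) /\ (Mb n < ix (h (aq n)))%N.
Proof.
case: n => [|n] /=; first exact: pk_spec.
have [A B] := pk_spec n.+1 (maxn (Mb n.+1) (ix (h (aq n)))); split => //.
exact: leq_ltn_trans (leq_maxl _ _) B.
Qed.
Lemma aq_inc n : (ix (h (aq n)) < ix (h (aq n.+1)))%N.
Proof.
rewrite [aq n.+1]/=; have [_ B] := pk_spec n.+1 (maxn (Mb n.+1) (ix (h (aq n)))).
exact: leq_ltn_trans (leq_maxr _ _) B.
Qed.

Definition AA n : X := h (aq n).
Lemma AA_le n m : (n <= m)%N <-> le1 (AA n) (AA m).
Proof. rewrite (idx_le Hg1 Hg1s); exact: (sinc_mono (p := fun n => ix (h (aq n))) aq_inc). Qed.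
Lemma AA_inj n m : AA n = AA m -> n = m.
Proof. move=> E'; apply: (sinc_inj (p := fun n => ix (h (aq n))) aq_inc); by rewrite /AA in E'; rewrite E'. Qed.

Definition phiS (s : S) : S' := E (AA (i1 (f s).1)) (bX (f s).2).

Lemma phiS_valid s : valid le1 le2 (AA (i1 (f s).1)) (bX (f s).2).
Proof.
have [A B] := aq_spec (i1 (f s).1); split.
- apply/Hh; apply: ltW; apply: A; exact: col_f.
- apply/(idx_le Hg1 Hg1s); apply: ltnW; apply: leq_ltn_trans B.
  rewrite /Mb; apply: (foldr_maxn_ge (fun c => ix (bX c))); exact: col_f.
Qed.

Lemma cp_phiS s : cp (phiS s) = Some (AA (i1 (f s).1), bX (f s).2).
Proof. rewrite /phiS Elt_spec //; exact: phiS_valid. Qed.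

Lemma phiS_join s t : phiS (jjoin s t) = jjoin (phiS s) (phiS t).
Proof.
apply: (cpair_inj L1 L2 Hc Hi).
rewrite (cpair_join L1 L2 Hc Hj) !cp_phiS /= fJ /=.
congr (Some (_, _)).
- apply: (maxo_map (m := fun x => AA (i1 x))); rewrite cle1_i1; exact: AA_le.
- apply: maxo_map; exact: bX_le.
Qed.

Lemma phiS_inj s t : phiS s = phiS t -> s = t.
Proof.
move/(congr1 cp); rewrite !cp_phiS => -[E1 E2].
apply: Hfi; rewrite (surjective_pairing (f s)) (surjective_pairing (f t)).
congr pair.
- by rewrite -i1K (AA_inj E1) i1K.
- apply: (lo_anti LC2); apply/bX_le; rewrite E2; exact: (lo_refl L2).
Qed.

Lemma embed1 : jsl_embeds S S'.
Proof.
exists phiS; split; first exact: phiS_inj.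
move=> a b; rewrite phiS_join; exact: jjoin_lub.
Qed.

Definition rho (q : rat) : S := proj1_sig (constructive_indefinite_description _ (Hh2A q)).
Lemma rho_spec q : (f (rho q)).2 = h2 q.
Proof. rewrite /rho; by case: constructive_indefinite_description. Qed.

Definition eXn : nat -> rat := proj1_sig (constructive_indefinite_description _ (GE L2 g1)).
Lemma eXn_spec i j : le2 (g1 i) (g1 j) <-> eXn i <= eXn j.
Proof. rewrite /eXn; case: constructive_indefinite_description => e He /=; exact: He. Qed.

Definition kq (x : X) : rat := phi0 (eXn (ix x)).
Lemma kq_le x x' : le2 x x' <-> kq x <= kq x'.
Proof. by rewrite -phi0_mono -eXn_spec !idxK. Qed.
Definition kk (x : X) : C2 := h2 (kq x).
Lemma kk_le x x' : le2 x x' <-> cle2 (kk x) (kk x').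
Proof. by rewrite -Hh2 -kq_le. Qed.

Definition sig (x : X) : S := rho (kq x).
Definition sig0 : S := rho (-1).
Definition x0 : C1 := (f sig0).1.

Lemma G3_inj : forall k k' : nat, -2 - k%:R = -2 - k'%:R :> rat -> k = k'.
Proof. move=> k k' Heq; apply/eqP; rewrite -(eqr_nat rat); apply/eqP; lra. Qed.

Lemma pumpex (N : nat) : exists s, (N < i1 (f s).1)%N /\ exists q, q < -1 /\ (f s).2 = h2 q.
Proof.
have [k Hk] : exists k : nat, ~ (i1 (f (rho (-2 - k%:R))).1 <= N)%N.
  apply: (@escape _ _ (fun k : nat => rho (-2 - k%:R)) f (fun s => (i1 (f s).1 <= N)%N)
    (List.flat_map (fun n => List.map (fun c => (g n, c)) (col n)) (List.seq 0 N.+1))).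
  - move=> k k' /(congr1 snd); rewrite !rho_spec => /(h_inj Hh2); exact: G3_inj.
  - move=> s H; apply/List.in_flat_map; exists (i1 (f s).1); split.
    + apply/List.in_seq; move/ssrnat.leP: H => ?; lia.
    + apply/List.in_map_iff; exists (f s).2; split; last exact: col_f.
      by rewrite i1K -surjective_pairing.
exists (rho (-2 - k%:R)); split; first by rewrite ltnNge; apply/negP.
exists (-2 - k%:R); split; last exact: rho_spec.
have : (0 : rat) <= k%:R by exact: ler0n. lra.
Qed.

Definition pump N : S := proj1_sig (constructive_indefinite_description _ (pumpex N)).
Lemma pump_spec N : (N < i1 (f (pump N)).1)%N /\ exists q, q < -1 /\ (f (pump N)).2 = h2 q.
Proof. rewrite /pump; by case: constructive_indefinite_description. Qed.

Definition Bd (i : nat) : nat :=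
  maxn (i1 x0) (foldr maxn 0%N (List.map (fun j => i1 (f (sig (g1 j))).1) (List.seq 0 i.+1))).
Lemma Bd_ge i j : (j <= i)%N -> (i1 (f (sig (g1 j))).1 <= Bd i)%N.
Proof.
move=> H; apply: leq_trans (leq_maxr _ _).
apply: (foldr_maxn_ge (fun j => i1 (f (sig (g1 j))).1)); apply/List.in_seq.
move/ssrnat.leP: H => ?; lia.
Qed.

Fixpoint pm (i : nat) : S := match i with
  | 0 => pump (Bd 0)
  | i'.+1 => pump (maxn (Bd i'.+1) (i1 (f (pm i')).1))
  end.
Definition mm i := i1 (f (pm i)).1.

Lemma pm_spec i : (Bd i < mm i)%N /\ exists q, q < -1 /\ (f (pm i)).2 = h2 q.
Proof.
rewrite /mm; case: i => [|i] /=; first exact: pump_spec.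
have [A B] := pump_spec (maxn (Bd i.+1) (i1 (f (pm i)).1)); split => //.
exact: leq_ltn_trans (leq_maxl _ _) A.
Qed.
Lemma mm_inc i : (mm i < mm i.+1)%N.
Proof.
rewrite /mm [pm i.+1]/=; have [A _] := pump_spec (maxn (Bd i.+1) (i1 (f (pm i)).1)).
exact: leq_ltn_trans (leq_maxr _ _) A.
Qed.

Definition psi (s : S') : S :=
  match cp s with
  | None => sig0
  | Some (a, b) => jjoin sig0 (jjoin (pm (ix a)) (sig b))
  end.
Definition fpsi (s : S') : (C1 * C2)%type :=
  match cp s with
  | None => (x0, h2 (-1))
  | Some (a, b) => (g (mm (ix a)), kk b)
  end.

Lemma f_sig0 : f sig0 = (x0, h2 (-1)).
Proof. by rewrite (surjective_pairing (f sig0)) /sig0 rho_spec. Qed.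

Lemma x0_le i : cle1 x0 (g (mm i)).
Proof.
rewrite /x0 /mm -i1K; apply/Hg; apply: ltnW; apply: leq_ltn_trans (proj1 (pm_spec i)).
exact: leq_maxl.
Qed.

Lemma c0_le b : cle2 (h2 (-1)) (kk b).
Proof. apply/Hh2; apply: ltW; exact: phi0_gt. Qed.

Lemma f_psi s : f (psi s) = fpsi s.
Proof.
have := cpair_spec L1 L2 Hc s; rewrite /psi /fpsi.
case: (cp s) => [[a b]|] /=; last by rewrite f_sig0.
move=> [[_ Hba] _].
have [Hbd [q [Hq Hfq]]] := pm_spec (ix a).
rewrite !fJ f_sig0 /= Hfq /sig rho_spec.
have H1 : cle1 (f (rho (kq b))).1 (f (pm (ix a))).1.
  apply/cle1_i1; apply: ltnW; apply: leq_ltn_trans Hbd.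
  rewrite -{1}(idxK Hg1s b); apply: Bd_ge; exact/(idx_le Hg1 Hg1s).
rewrite (maxo_l LC1 H1).
have H2 : cle2 (h2 q) (h2 (kq b)) by apply/Hh2; apply: ltW; apply: lt_trans Hq (phi0_gt _).
rewrite (maxo_r H2).
have E1 : (f (pm (ix a))).1 = g (mm (ix a)) by rewrite /mm i1K.
rewrite E1 maxo_r; last exact: x0_le.
rewrite maxo_r //; exact: c0_le.
Qed.

Lemma psi_inj s t : psi s = psi t -> s = t.
Proof.
move=> E'; have := congr1 f E'; rewrite !f_psi /fpsi => Hf.
apply: (cpair_inj L1 L2 Hc Hi); move: Hf.
case: (cp s) => [[a b]|]; case: (cp t) => [[a' b']|] // [E1 E2].
- have Ha : a = a' := idx_inj (sinc_inj mm_inc (g_inj E1)).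
  have Hb : b = b'.
    apply: (lo_anti L2); apply/kk_le; rewrite E2; exact: (lo_refl LC2).
  by rewrite Ha Hb.
- exfalso; have := phi0_gt (eXn (ix b)); move/(h_inj Hh2): E2 => <-; by rewrite ltxx.
- exfalso; have := phi0_gt (eXn (ix b')); move/(h_inj Hh2): E2 => ->; by rewrite ltxx.
Qed.

Lemma psi_join s t : psi (jjoin s t) = jjoin (psi s) (psi t).
Proof.
apply: Hfi; rewrite fJ !f_psi /fpsi (cpair_join L1 L2 Hc Hj).
case: (cp s) => [[a b]|]; case: (cp t) => [[a' b']|] /=.
- congr pair.
  + apply: (maxo_map (m := fun a => g (mm (ix a)))).
    rewrite -Hg -(sinc_mono mm_inc); exact: (idx_le Hg1 Hg1s).
  + apply: maxo_map; exact: kk_le.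
- by rewrite (maxo_l LC1 (x0_le _)) (maxo_l LC2 (c0_le _)).
- by rewrite (maxo_r (x0_le _)) (maxo_r (c0_le _)).
- by rewrite !maxo_id.
Qed.

Lemma embed2 : jsl_embeds S' S.
Proof.
exists psi; split; first exact: psi_inj.
move=> a b; rewrite psi_join; exact: jjoin_lub.
Qed.

End Bwd.

End Part6.
Import Part6.

Unset Implicit Arguments.

Theorem proposition8p2 (S' : JSL) (HS' : in_LD S') (S : JSL) :
  equimorphic S S' <->
  exists (C1 C2 : Chain) (f : S -> (C1 * C2)%type),
    (forall a b, f a = f b -> a = b) /\
    join_preserving (@prod_le C1 C2) f /\
    has_order_type_omega (@cle C1) (fun x => exists s, (f s).1 = x) /\
    ~ order_scattered (@cle C2) (fun y => exists s, (f s).2 = y) /\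
    (forall x : C1, (exists s, (f s).1 = x) ->
       exists l : list C2, forall y : C2, (exists s, f s = (x, y)) -> Stdlib.Lists.List.In y l).
Proof.
case: HS' => X [le1 [le2 [L1 [L2 [[g1 [Hg1 Hg1s]] [Hns [phi [Hc [Hs [Hi Hj]]]]]]]]]].
have Hg1s' : forall x, exists n, g1 n = x := fun x => proj1 (Hg1s x) I.
have [h [_ Hh]] := NNPP _ Hns.
split.
- move=> [[u [Hui Huj]] [w [Hwi Hwj]]].
  exact: (forward_main L1 L2 Hg1 Hg1s' Hh Hc Hs Hi Hj Hui Huj Hwi Hwj).
- move=> [C1 [C2 [f [Hfi [Hfj [[g [Hg HgA]] [Hns2 Hcol]]]]]]].
  have [h2 [Hh2A Hh2]] := NNPP _ Hns2.
  split.
  + exact: (embed1 L1 L2 Hg1 Hg1s' Hh Hc Hs Hi Hj Hfi Hfj Hg HgA h2 Hcol).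
  + exact: (embed2 L1 L2 Hg1 Hg1s' Hc Hi Hj Hfi Hfj Hg HgA Hh2A Hh2 Hcol).
Qed.
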